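(* Let $V$ be a finite set and $\{\eta(t),t\ge0\}$ a consistent configuration process on $\Omega$. Let $\mathbf x=(x_1,\dots,x_n)\in V_n$. Then for all $m\in\{1,\dots,n-1\}$, all $\xi\in\Omega_m$ and all $t\ge0$, $$\mathbb E_{\phi(\mathbf x)}[F(\xi,\eta(t))]=\sum_{1\le i_1<\dots<i_m\le n}\mathbb P_{\phi(x_{i_1},\dots,x_{i_m})}\big(\eta(t)=\xi\big).$$
   Context: $\Lambda\subseteq\mathbb N_0$; $\Omega_n=\{\eta\in\Lambda^V:\sum_x\eta_x=n\}$, $\Omega=\bigcup_n\Omega_n$; for $\mathbf y\in V^k$, $\phi(\mathbf y)=\sum_i\delta_{y_i}$; $V_n=\{\mathbf x\in V^n:\phi(\mathbf x)\in\Omega_n\}$. $F(\xi,\eta):=\prod_{j\in V}\binom{\eta_j}{\xi_j}$. A configuration process is a particle-number-conserving Markov process on $\Omega$ with generator $\mathcal L$; $\mathbb P_\eta,\mathbb E_\eta$ denote its law and expectation started from $\eta$. It is consistent if $[\mathcal L,\mathcal A]=0$, where $\mathcal Af(\eta)=\sum_{x\in V}\eta_xf(\eta-\delta_x)$ (terms with $\eta_x=0$ vanish). *)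

(* Defs.v *)
From HB Require Import structures.
From mathcomp Require Import all_boot all_order all_algebra.
From mathcomp Require Import all_classical all_reals all_analysis.
Set Implicit Arguments. Unset Strict Implicit. Unset Printing Implicit Defensive.
Import Order.TTheory GRing.Theory Num.Theory.
Local Open Scope ring_scope.

Definition config (V : finType) := {ffun V -> nat}.

Definition npart {V : finType} (eta : config V) : nat := (\sum_(x : V) eta x)%N.

Definition inOmega {V : finType} (Lam : pred nat) (eta : config V) : bool :=
  [forall x, Lam (eta x)].

Definition of_ord {V : finType} (k : nat) (g : {ffun V -> 'I_k.+1}) : config V :=
  [ffun x => nat_of_ord (g x)].

(* duplicate-free enumeration of the finite set Omega_k *)
Definition Omega_n {V : finType} (Lam : pred nat) (k : nat) : seq (config V) :=
  [seq of_ord g | g <- enum {ffun V -> 'I_k.+1}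
     & (npart (of_ord g) == k) && inOmega Lam (of_ord g)].

Definition subd {V : finType} (eta : config V) (x : V) : config V :=
  [ffun y => if y == x then (eta y).-1 else eta y].

(* Lambda is downward closed (needed for A to act on functions on Omega) *)
Definition downward_closed (Lam : pred nat) : Prop :=
  forall k l, (l <= k)%N -> Lam k -> Lam l.

Definition genL {R : realType} {V : finType} (Lam : pred nat)
  (c : config V -> config V -> R) (f : config V -> R) (eta : config V) : R :=
  \sum_(zeta <- Omega_n Lam (npart eta) | zeta != eta) c eta zeta * (f zeta - f eta).

Definition annih {R : realType} {V : finType} (f : config V -> R) (eta : config V) : R :=
  \sum_(x : V) (eta x)%:R * f (subd eta x).

Definition is_rates {R : realType} {V : finType} (c : config V -> config V -> R) : Prop :=
  forall eta zeta, eta != zeta -> 0 <= c eta zeta.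

Definition consistent {R : realType} {V : finType} (Lam : pred nat)
  (c : config V -> config V -> R) : Prop :=
  forall (f : config V -> R) (eta : config V), inOmega Lam eta ->
    genL Lam c (annih f) eta = annih (genL Lam c f) eta.

(* P t eta zeta = P_eta(eta(t) = zeta): the transition function of the chain,
   characterised by P_0 = Id and Kolmogorov's backward equation d/dt P_t = L P_t
   (unique solution = e^{tL} on each finite sector Omega_k). *)
Definition transition {R : realType} {V : finType} (Lam : pred nat)
  (c : config V -> config V -> R) (P : R -> config V -> config V -> R) : Prop :=
  (forall eta zeta, inOmega Lam eta -> P 0 eta zeta = (eta == zeta)%:R) /\
  (forall eta zeta (t : R), inOmega Lam eta ->
     is_derive t 1 (fun s => P s eta zeta)
       (genL Lam c (fun omega => P t omega zeta) eta)).

(* E_eta[ g(eta(t)) ]  (the process stays in Omega_{|eta|}) *)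
Definition Expect {R : realType} {V : finType} (Lam : pred nat)
  (P : R -> config V -> config V -> R) (t : R) (eta : config V) (g : config V -> R) : R :=
  \sum_(zeta <- Omega_n Lam (npart eta)) P t eta zeta * g zeta.

Definition Fdual {V : finType} (xi eta : config V) : nat :=
  (\prod_(j : V) 'C(eta j, xi j))%N.

Definition phi {V : finType} {n : nat} (x : 'I_n -> V) (I : {set 'I_n}) : config V :=
  [ffun v => #|[set i in I | x i == v]|].

(* Main.v *)
Require Import Defs.
From HB Require Import structures.
From mathcomp Require Import all_boot all_order all_algebra.
From mathcomp Require Import all_classical all_reals all_analysis.
From mathcomp Require Import ring lra zify.
Import Order.TTheory GRing.Theory Num.Theory.
Local Open Scope ring_scope.
Set Implicit Arguments. Unset Strict Implicit. Unset Printing Implicit Defensive.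

Lemma of_ord_inj (V : finType) k : injective (@of_ord V k).
Proof.
move=> g h /ffunP e; apply/ffunP => v; apply: val_inj.
by have := e v; rewrite !ffunE.
Qed.

Lemma mem_Omega_n (V : finType) (Lam : pred nat) k (eta : config V) :
  (eta \in Omega_n Lam k) = (npart eta == k) && inOmega Lam eta.
Proof.
apply/idP/idP.
  by case/mapP => g; rewrite mem_filter => /andP [h _] ->.
case/andP => /eqP hk hO.
have le : forall v, (eta v < k.+1)%N.
  move=> v; rewrite ltnS -hk /npart (bigD1 v) //=; exact: leq_addr.
apply/mapP; exists [ffun v => Ordinal (le v)].
  rewrite mem_filter mem_enum andbT.
  have -> : of_ord [ffun v => Ordinal (le v)] = eta.
    by apply/ffunP => v; rewrite !ffunE.
  by rewrite hk eqxx hO.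
by apply/ffunP => v; rewrite !ffunE.
Qed.

Lemma uniq_Omega_n (V : finType) (Lam : pred nat) k : uniq (@Omega_n V Lam k).
Proof.
rewrite /Omega_n map_inj_uniq; first by rewrite filter_uniq // enum_uniq.
exact: of_ord_inj.
Qed.

Lemma subd_Omega (V : finType) (Lam : pred nat) (eta : config V) x :
  downward_closed Lam -> inOmega Lam eta -> inOmega Lam (subd eta x).
Proof.
move=> dc /forallP h; apply/forallP => y; rewrite ffunE.
case: (y == x); last exact: h.
apply: (dc (eta y)); [exact: leq_pred | exact: h].
Qed.

Lemma npart_phi (V : finType) n (x : 'I_n -> V) (I : {set 'I_n}) :
  npart (phi x I) = #|I|.
Proof.
rewrite /npart (eq_bigr (fun v => \sum_(i in I | x i == v) 1)%N).
  by rewrite -(partition_big x predT) //= sum1_card.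
move=> v _; rewrite ffunE sum1_card; apply: eq_card => i; by rewrite !inE.
Qed.

Lemma subd_ne (V : finType) (eta : config V) x j : j != x -> subd eta x j = eta j.
Proof. by move=> h; rewrite ffunE (negbTE h). Qed.

Lemma subd_eq (V : finType) (eta : config V) x : subd eta x x = (eta x).-1.
Proof. by rewrite ffunE eqxx. Qed.

Lemma Fdual_subd (V : finType) (xi eta : config V) x :
  (eta x * Fdual xi (subd eta x) = (eta x - xi x) * Fdual xi eta)%N.
Proof.
rewrite /Fdual (bigD1 x) // [in RHS](bigD1 x) //= subd_eq !mulnA mul_bin_down.
congr (_ * _)%N; apply: eq_bigr => j hj; by rewrite subd_ne.
Qed.

Lemma Fdual_le (V : finType) (xi eta : config V) :
  Fdual xi eta != 0%N -> forall j, (xi j <= eta j)%N.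
Proof.
move=> h j; rewrite leqNgt; apply/negP => lt; move: h.
by rewrite /Fdual (bigD1 j) //= bin_small // mul0n.
Qed.

Lemma sum_sub (V : finType) (xi eta : config V) :
  (forall j, (xi j <= eta j)%N) ->
  (\sum_j (eta j - xi j) = npart eta - npart xi)%N.
Proof.
move=> h; rewrite /npart.
have -> : (\sum_j eta j = \sum_j (eta j - xi j) + \sum_j xi j)%N.
  by rewrite -big_split; apply: eq_bigr => j _ /=; rewrite subnK.
by rewrite addnK.
Qed.

Lemma KL (V : finType) (xi eta : config V) :
  (\sum_x eta x * Fdual xi (subd eta x) = (npart eta - npart xi) * Fdual xi eta)%N.
Proof.
rewrite (eq_bigr _ (fun x _ => Fdual_subd xi eta x)) -big_distrl /=.
have [->|h] := eqVneq (Fdual xi eta) 0%N; first by rewrite !muln0.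
by rewrite sum_sub //; exact: Fdual_le.
Qed.

Lemma npart_subd (V : finType) (eta : config V) x :
  (0 < eta x)%N -> npart (subd eta x) = (npart eta).-1.
Proof.
move=> h; rewrite /npart (bigD1 x) // [in RHS](bigD1 x) //= subd_eq.
rewrite (eq_bigr (fun j => eta j)); last by move=> j hj; rewrite subd_ne.
move: h; set a := eta x; set b := (\sum_(_ | _) _)%N; lia.
Qed.

Lemma Fdual_eq (V : finType) (xi eta : config V) :
  npart eta = npart xi -> Fdual xi eta = (eta == xi).
Proof.
move=> e; have [->|ne] := eqVneq eta xi.
  by rewrite /Fdual big1 // => j _; rewrite binn.
apply/eqP; apply: contraNT ne => h.
have le := Fdual_le h.
have := sum_sub le; rewrite e subnn => /eqP; rewrite sum_nat_eq0 => /forallP hz.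
apply/eqP/ffunP => j; have := hz j; have := le j; simpl; lia.
Qed.

Lemma CL1 (R : realType) (V : finType) (xi : config V) k (eta : config V) :
  npart eta = (npart xi + k)%N ->
  iter k (@annih R V) (fun omega => ((omega == xi)%:R : R)) eta
  = (k`!)%:R * (Fdual xi eta)%:R.
Proof.
elim: k eta => [|k IH] eta he.
  by rewrite /= mul1r Fdual_eq // he addn0.
rewrite [LHS]/= /annih.
rewrite (eq_bigr (fun x => (k`!)%:R * ((eta x * Fdual xi (subd eta x))%N)%:R)).
  rewrite -mulr_sumr -natr_sum KL he factS addKn !natrM; ring.
move=> x _; have [h0|hp] := posnP (eta x).
  by rewrite h0 !mul0r mul0n mulr0.
rewrite IH; last by rewrite npart_subd // he; lia.
by rewrite natrM; ring.
Qed.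

Lemma phi_D1 (V : finType) n (x : 'I_n -> V) (J : {set 'I_n}) j :
  j \in J -> phi x (J :\ j) = subd (phi x J) (x j).
Proof.
move=> hj; apply/ffunP => w; rewrite !ffunE.
have [e|ne] := eqVneq w (x j).
  have hin : j \in [set i in J | x i == w] by rewrite inE hj e eqxx.
  rewrite (cardsD1 j [set i in J | x i == w]) hin add1n /=.
  by apply: eq_card => i; rewrite !inE; case: (i == j); rewrite /= ?andbF.
apply: eq_card => i; rewrite !inE; have [->|] := eqVneq i j; last by []. by rewrite /= eq_sym (negbTE ne) andbF.
Qed.

Lemma annih_phi (R : realType) (V : finType) n (x : 'I_n -> V) (J : {set 'I_n})
  (h : config V -> R) :
  annih h (phi x J) = \sum_(j in J) h (phi x (J :\ j)).
Proof.
rewrite /annih (partition_big x predT) //=; apply: eq_bigr => v _.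
rewrite (eq_bigr (fun _ => h (subd (phi x J) v))); last first.
  by move=> j /andP [hj /eqP <-]; rewrite phi_D1.
rewrite (eq_bigl (fun j => j \in [set i in J | x i == v])); last by move=> j; rewrite inE.
by rewrite sumr_const ffunE mulr_natl.
Qed.

Lemma CL2 (R : realType) (V : finType) n (x : 'I_n -> V) k :
  forall (J : {set 'I_n}) (g : config V -> R), (k <= #|J|)%N ->
  iter k (@annih R V) g (phi x J) =
  (k`!)%:R * \sum_(I : {set 'I_n} | (I \subset J) && (#|I| == #|J| - k)%N) g (phi x I).
Proof.
elim: k => [|k IH] J g hk.
  rewrite /= mul1r (big_pred1 J) // => I /=.
  rewrite eqEcard subn0; case sub: (I \subset J) => //=.
  by rewrite eqn_leq (subset_leq_card sub).
rewrite iterS annih_phi.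
have cJ : forall j, j \in J -> #|J :\ j| = #|J|.-1.
  by move=> j hj; rewrite (cardsD1 j J) hj.
rewrite (eq_bigr (fun j => (k`!)%:R * \sum_(I : {set 'I_n} | (I \subset J :\ j) && (#|I| == #|J| - k.+1)%N) g (phi x I))); last first.
  move=> j hj; rewrite IH ?cJ //; last by lia.
  congr (_ * _); apply: eq_bigl => I; congr (_ && (_ == _)); lia.
rewrite -mulr_sumr.
rewrite (exchange_big_dep (fun I : {set 'I_n} => (I \subset J) && (#|I| == #|J| - k.+1)%N)) /=; last first.
  by move=> j I hj /andP [hs ->]; rewrite andbT; move: hs; rewrite subsetD1 => /andP [].
rewrite factS natrM [(k.+1)%:R * _]mulrC -mulrA; congr (_ * _).
rewrite mulr_sumr; apply: eq_bigr => I /andP [hs /eqP hc].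
rewrite (eq_bigl (fun j => j \in J :\: I)); last first.
  by move=> j; rewrite subsetD1 hs hc eqxx !inE /= andbT andbC.
rewrite sumr_const mulr_natl; congr (_ *+ _).
rewrite cardsD; have -> : J :&: I = I by apply/finset.setIidPr.
by rewrite hc subKn.
Qed.

Section S.
Variables (R : realType) (V : finType) (Lam : pred nat) (c : config V -> config V -> R).
Hypothesis dc : downward_closed Lam.

Lemma A_ext (f g : config V -> R) :
  (forall omega, inOmega Lam omega -> f omega = g omega) ->
  forall k eta, inOmega Lam eta -> iter k (@annih R V) f eta = iter k (@annih R V) g eta.
Proof.
move=> hfg; elim=> [|k IH] eta he; first exact: hfg.
rewrite !iterS /annih; apply: eq_bigr => x _; rewrite IH //; exact: subd_Omega.
Qed.

Lemma C1 : consistent Lam c -> forall k f eta, inOmega Lam eta ->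
  genL Lam c (iter k (@annih R V) f) eta = iter k (@annih R V) (genL Lam c f) eta.
Proof.
move=> cons; elim=> [|k IH] f eta he; first by [].
rewrite iterS cons // iterS /annih; apply: eq_bigr => x _; rewrite IH //.
exact: subd_Omega.
Qed.

Lemma is_derive_sumseq (T : eqType) (r : seq T) (h : T -> R -> R) (dh : T -> R) (t : R) :
  (forall i, i \in r -> is_derive t 1 (h i) (dh i)) ->
  is_derive t 1 (fun s => \sum_(i <- r) h i s) (\sum_(i <- r) dh i).
Proof.
elim: r => [|a r IH] hd.
  have -> : (fun s => \sum_(i <- [::]) h i s) = cst 0.
    by apply: funext => s; rewrite big_nil.
  rewrite big_nil; exact: is_derive_cst.
have -> : (fun s => \sum_(i <- a :: r) h i s) = h a + (fun s => \sum_(i <- r) h i s).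
  by apply: funext => s; rewrite big_cons.
rewrite big_cons; apply: is_deriveD; first by apply: hd; rewrite mem_head.
by apply: IH => i hi; apply: hd; rewrite in_cons hi orbT.
Qed.

Lemma DA (g : R -> config V -> R) (g' : config V -> R) (t : R) :
  (forall omega, inOmega Lam omega -> is_derive t 1 (fun s => g s omega) (g' omega)) ->
  forall k eta, inOmega Lam eta ->
  is_derive t 1 (fun s => iter k (@annih R V) (g s) eta) (iter k (@annih R V) g' eta).
Proof.
move=> hd; elim=> [|k IH] eta he; first exact: hd.
rewrite iterS /annih.
have -> : (fun s => iter k.+1 (@annih R V) (g s) eta) =
  (fun s => \sum_(x <- index_enum V) (eta x)%:R * iter k (@annih R V) (g s) (subd eta x)).
  by [].
apply: is_derive_sumseq => x _.
have := is_deriveZ (eta x)%:R (IH (subd eta x) (subd_Omega x dc he)).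
by [].
Qed.

Lemma genL_sum (T : Type) (r : seq T) (a : T -> R) (f : T -> config V -> R) eta :
  genL Lam c (fun omega => \sum_(i <- r) a i * f i omega) eta =
  \sum_(i <- r) a i * genL Lam c (f i) eta.
Proof.
rewrite /genL.
rewrite (eq_bigr (fun zeta => \sum_(i <- r) a i * (c eta zeta * (f i zeta - f i eta)))).
  rewrite exchange_big /=; apply: eq_bigr => i _; by rewrite mulr_sumr.
move=> zeta _; rewrite -sumrB mulr_sumr; apply: eq_bigr => i _; ring.
Qed.

Lemma genL_lin (a : R) (f g : config V -> R) eta :
  genL Lam c (fun omega => a * f omega - g omega) eta =
  a * genL Lam c f eta - genL Lam c g eta.
Proof.
rewrite /genL mulr_sumr -sumrB; apply: eq_bigr => zeta _; ring.
Qed.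

End S.

Lemma gronwall0 (R : realType) (E E' : R -> R) (K : R) :
  (forall t : R, is_derive t 1 E (E' t)) ->
  (forall t, E' t <= K * E t) ->
  (forall t, 0 <= E t) -> E 0 = 0 ->
  forall t, 0 <= t -> E t = 0.
Proof.
move=> dE hE pE E0 t t0.
pose g := fun s : R => expR (- (K * s)).
have dg : forall s : R, is_derive s 1 g (expR (- (K * s)) * (- K)).
  move=> s; rewrite /g.
  have h1 : is_derive s 1 (fun u : R => - (K * u)) (- K).
    have := @is_deriveN _ _ _ (fun u : R => K * u) s 1 K.
    apply; have := is_deriveZ K (@is_derive_id _ _ s 1).
    by rewrite /GRing.scale /= mulr1.
  exact: (@is_derive1_comp _ expR (fun u : R => - (K * u)) s _ _ _ h1).
pose G := fun s => E s * g s.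
have dG : forall s : R, is_derive s 1 G (E s * (expR (- (K * s)) * (- K)) + g s * E' s).
  move=> s; exact: (is_deriveM (dE s) (dg s)).
have dGd : forall x : R, derivable G x 1 by move=> x; case: (dG x).
have [c _ hc] := @MVT_segment R G (fun s => E s * (expR (- (K * s)) * (- K)) + g s * E' s) 0 t t0
  (fun x _ => dG x) (derivable_within_continuous (fun x _ => dGd x)).
have G0 : G 0 = 0 by rewrite /G E0 mul0r.
have Gt : G t <= 0.
  have : G t = G t - G 0 by rewrite G0 subr0.
  move=> ->; rewrite hc subr0; apply: mulr_le0_ge0 => //.
  have := hE c; have := expR_gt0 (- (K * c)); rewrite /g.
  move: (expR _) (E c) (E' c) => a e e' ha he.
  have -> : e * (a * - K) + a * e' = a * (e' - K * e) by ring.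
  by apply: mulr_ge0_le0; [exact: ltW | rewrite subr_le0].
apply/eqP; rewrite eq_le pE andbT.
move: Gt; rewrite /G /g pmulr_lle0 //; exact: expR_gt0.
Qed.

Lemma pt_ineq (R : realType) (a b c E : R) :
  a * a <= E -> b * b <= E -> 2 * (a * (c * (b - a))) <= 6 * `|c| * E.
Proof.
move=> ha hb.
have hab : a * b <= E by nra.
have hab' : - E <= a * b by nra.
have [c0|c0] := lerP 0 c.
  rewrite ger0_norm //; nra.
rewrite ltr0_norm //; nra.
Qed.

Lemma ode0 (R : realType) (V : finType) (Lam : pred nat) (c : config V -> config V -> R)
  (S : seq (config V)) (d : R -> config V -> R) :
  uniq S -> (forall eta, eta \in S -> Omega_n Lam (npart eta) = S) ->
  (forall eta (t : R), eta \in S -> is_derive t 1 (fun s => d s eta) (genL Lam c (d t) eta)) ->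
  (forall eta, eta \in S -> d 0 eta = 0) ->
  forall t : R, 0 <= t -> forall eta, eta \in S -> d t eta = 0.
Proof.
move=> uS hS hd h0 t t0.
pose E s := \sum_(eta <- S) d s eta * d s eta.
pose E' s := \sum_(eta <- S) 2 * (d s eta * genL Lam c (d s) eta).
pose K := \sum_(eta <- S) \sum_(zeta <- S | zeta != eta) 6 * `|c eta zeta|.
have sq_le : forall s eta, eta \in S -> d s eta * d s eta <= E s.
  move=> s eta he; rewrite /E (bigD1_seq eta) //=.
  rewrite lerDl; apply: sumr_ge0 => i _; by rewrite -expr2 sqr_ge0.
have Epos : forall s, 0 <= E s.
  by move=> s; apply: sumr_ge0 => i _; by rewrite -expr2 sqr_ge0.
have dE : forall s : R, is_derive s 1 E (E' s).
  move=> s; apply: is_derive_sumseq => eta he.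
  have := is_deriveM (hd eta s he) (hd eta s he).
  move=> H; apply: (is_derive_eq H).
  rewrite /GRing.scale /=; ring.
have bnd : forall s, E' s <= K * E s.
  move=> s; rewrite /E' /K mulr_suml big_seq [X in _ <= X]big_seq.
  apply: ler_sum => eta he.
  rewrite /genL (hS eta he) mulr_sumr mulr_suml mulr_sumr.
  rewrite big_seq_cond [X in _ <= X]big_seq_cond.
  apply: ler_sum => zeta /andP [hz _].
  apply: pt_ineq; exact: sq_le.
have E0 : E 0 = 0.
  rewrite /E big_seq big1 // => eta he; by rewrite h0 // mul0r.
have Et := gronwall0 dE bnd Epos E0 t0.
move=> eta he; have := sq_le t eta he; rewrite Et => hle.
have : d t eta * d t eta = 0.
  by apply/eqP; rewrite eq_le hle -expr2 sqr_ge0.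
by move/eqP; rewrite mulf_eq0 orbb => /eqP.
Qed.
Unset Implicit Arguments.


Theorem theorem3p7 (R : realType) (V : finType) (Lam : pred nat)
  (c : config V -> config V -> R) (P : R -> config V -> config V -> R)
  (n : nat) (x : 'I_n -> V) :
  downward_closed Lam ->
  is_rates c ->
  consistent Lam c ->
  transition Lam c P ->
  inOmega Lam (phi x [set: 'I_n]%SET) ->
  forall (m : nat) (xi : config V) (t : R),
    (0 < m < n)%N -> inOmega Lam xi -> npart xi = m -> 0 <= t ->
    Expect Lam P t (phi x [set: 'I_n]%SET) (fun eta => (Fdual xi eta)%:R)
    = \sum_(I : {set 'I_n} | #|I| == m) P t (phi x I) xi.
Proof.
move=> dc _ cons [P0 dP] hphi m xi t hm hxi hnx t0.
pose S := @Omega_n V Lam n.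
pose k := (n - m)%N.
pose u (s : R) omega := \sum_(zeta <- S) (Fdual xi zeta)%:R * P s omega zeta.
pose w (s : R) omega := iter k (@annih R V) (fun o => P s o xi) omega.
pose d (s : R) omega := (k`!)%:R * u s omega - w s omega.
have memS : forall eta, (eta \in S) = (npart eta == n) && inOmega Lam eta.
  by move=> eta; rewrite mem_Omega_n.
have hS : forall eta, eta \in S -> Omega_n Lam (npart eta) = S.
  by move=> eta; rewrite memS => /andP [/eqP -> _].
have dd : forall eta (s : R), eta \in S ->
    is_derive s 1 (fun r => d r eta) (genL Lam c (d s) eta).
  move=> eta s he; have hO : inOmega Lam eta by move: he; rewrite memS => /andP [].
  have du : is_derive s 1 (fun r => u r eta)
      (\sum_(zeta <- S) (Fdual xi zeta)%:R * genL Lam c (fun o => P s o zeta) eta).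
    apply: is_derive_sumseq => zeta _.
    exact: (is_deriveZ (Fdual xi zeta)%:R (dP eta zeta s hO)).
  have dw : is_derive s 1 (fun r => w r eta)
      (iter k (@annih R V) (genL Lam c (fun o => P s o xi)) eta).
    apply: DA => // omega hom; exact: dP.
  have := is_deriveB (is_deriveZ (k`!)%:R du) dw.
  move=> H; apply: (is_derive_eq H).
  by rewrite /d genL_lin /u genL_sum /w C1.
have d0 : forall eta, eta \in S -> d 0 eta = 0.
  move=> eta he; have /andP [/eqP hn hO] : (npart eta == n) && inOmega Lam eta by rewrite -memS.
  rewrite /d /u /w.
  rewrite (@A_ext R V Lam dc (fun o => P 0 o xi) (fun o => ((o == xi)%:R : R)) (fun o ho => P0 o xi ho) k eta hO).
  rewrite CL1; last by rewrite hn hnx /k; lia.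
  rewrite (bigD1_seq eta) //=; last exact: uniq_Omega_n.
  rewrite (P0 _ _ hO) eqxx mulr1 big1 ?addr0 ?subrr // => zeta hz.
  by rewrite (P0 _ _ hO) eq_sym (negbTE hz) mulr0.
have phiS : phi x [set: 'I_n] \in S by rewrite memS npart_phi cardsT card_ord eqxx hphi.
have := ode0 (uniq_Omega_n V Lam n) hS dd d0 t0 phiS.
rewrite /d /w CL2; last by rewrite cardsT card_ord /k; lia.
move/eqP; rewrite subr_eq0 => /eqP /mulfI => e.
have e' := e ltac:(by rewrite pnatr_eq0 -lt0n fact_gt0). 
rewrite /Expect npart_phi cardsT card_ord.
transitivity (u t (phi x [set: 'I_n])).
  by apply: eq_bigr => zeta _; rewrite mulrC.
rewrite e'; apply: eq_bigl => I; rewrite finset.subsetT cardsT card_ord /k /=.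
congr (_ == _); lia.
Qed.
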